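(* Let $A\geq1$ and $\varepsilon>0$ be fixed. Let $a,c\in\mathbb{Z}\setminus\{0\}$, $b\in\mathbb{Z}$ and $x_1,x_2\geq1$ be such that $|c|<x_2^{A}$. Then $$\#\{n\in\mathbb{Z}\cap[-x_1,x_1]:\ \gcd(an+b,c)>x_2\}\ll \frac{x_1\gcd(a,c)}{x_2^{1-\varepsilon}}+\tau(c),$$ where the implied constant depends only on $A$ and $\varepsilon$.
   Context: $\tau(c)$ denotes the number of positive divisors of $c$. *)

(* Defs.v *)
From Stdlib Require Import Reals ZArith List Lia Lra.
Open Scope R_scope.

Definition Z_window (M : Z) : list Z :=
  map (fun k => (Z.of_nat k - M)%Z) (seq 0 (Z.to_nat (2 * M + 1))).

Definition tau (c : Z) : nat :=
  length (filter (fun d => Z.eqb (Z.rem c d) 0)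
                 (map Z.of_nat (seq 1 (Z.to_nat (Z.abs c))))).

Definition bad_count (a b c : Z) (x1 x2 : R) : nat :=
  length (filter (fun n =>
     if Rle_dec (Rabs (IZR n)) x1 then
       if Rlt_dec x2 (IZR (Z.gcd (a * n + b) c)) then true else false
     else false)
   (Z_window (Z.abs (up x1)))).

(* Main.v *)
Require Import Defs.
From Stdlib Require Import Reals ZArith.
Open Scope R_scope.
From Stdlib Require Import List Lia Lra.

Module DivBound.
From mathcomp Require Import ssreflect ssrfun ssrbool eqtype ssrnat seq path div prime bigop.
Open Scope R_scope.

Definition Bc (d : R) := 1 + / (d * ln 2).
Definition P0 (d : R) := Z.to_nat (up (exp (/ d))).

Lemma ln2_pos : 0 < ln 2.
Proof. rewrite -ln_1; apply ln_increasing; lra. Qed.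

Lemma Bc_ge1 d : 0 < d -> 1 <= Bc d.
Proof.
move=> hd; rewrite /Bc. have := ln2_pos => h.
have : 0 < / (d * ln 2) by apply Rinv_0_lt_compat; nra.
lra.
Qed.

Lemma expn_pow p e : INR (p ^ e)%N = INR p ^ e.
Proof.
elim: e => [|e IH]; first by rewrite expn0.
by rewrite expnS -multE mult_INR IH.
Qed.

Lemma factor_bound d p e : 0 < d -> (2 <= p)%N ->
  INR e.+1 <= (if (p < P0 d)%N then Bc d else 1) * Rpower (INR (p ^ e)%N) d.
Proof.
move=> hd hp.
have hp2 : 2 <= INR p by have := le_INR 2 p; apply; apply/leP.
have hlp : ln 2 <= ln (INR p).
  case: (Req_dec (INR p) 2) => [->|hne]; first lra.
  apply Rlt_le, ln_increasing; lra.
have l2 := ln2_pos.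
have hR : 1 + d * (INR e * ln (INR p)) <= Rpower (INR (p ^ e)%N) d.
  rewrite /Rpower expn_pow ln_pow; last lra.
  apply exp_ineq1_le.
have he : 0 <= INR e by apply pos_INR.
rewrite S_INR.
case: ifP => hlt.
- rewrite /Bc.
  have hi : 0 < / (d * ln 2) by apply Rinv_0_lt_compat; nra.
  have hk : / (d * ln 2) * (d * ln 2) = 1 by field; lra.
  have h1 : 1 + INR e <= (1 + / (d * ln 2)) * (1 + d * (INR e * ln 2)).
    have h3 : / (d * ln 2) * (d * (INR e * ln 2)) = INR e by field; lra.
    have : 0 <= d * (INR e * ln 2).
      apply Rmult_le_pos; first lra. apply Rmult_le_pos; lra.
    nra.
  have h2 : (1 + d * (INR e * ln 2)) <= Rpower (INR (p ^ e)%N) d.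
    have : d * (INR e * ln 2) <= d * (INR e * ln (INR p)).
      apply Rmult_le_compat_l; [lra|]; apply Rmult_le_compat_l; lra.
    lra.
  rewrite Rplus_comm; apply (Rle_trans _ _ _ h1), Rmult_le_compat_l; lra.
- have hge : (P0 d <= p)%N by rewrite leqNgt hlt.
  have hP : exp (/ d) < INR p.
    have hup := archimed (exp (/ d)).
    have hpos : (0 <= up (exp (/ d)))%Z.
      apply le_IZR; have := exp_pos (/ d); lra.
    have : IZR (up (exp (/ d))) <= INR p.
      rewrite /P0 in hge.
      rewrite -(Z2Nat.id _ hpos) -INR_IZR_INZ; apply le_INR; by apply/leP.
    lra.
  have hl : / d < ln (INR p).
    rewrite -[/ d]ln_exp; apply ln_increasing => //; apply exp_pos.
  have : 1 <= d * ln (INR p).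
    have : d * / d = 1 by field; lra.
    nra.
  move=> h1.
  have : INR e <= d * (INR e * ln (INR p)) by nra.
  lra.
Qed.

Lemma size_add_divisors f divs :
  size (PrimeDecompAux.add_divisors f divs) = (f.2.+1 * size divs)%N.
Proof.
case: f => p e; rewrite /PrimeDecompAux.add_divisors /=.
elim: e => [|e IH]; first by rewrite mul1n.
by rewrite iterS size_merge size_cat size_map IH [(e.+2 * _)%N]mulSn addnC.
Qed.

Lemma prod_pd_gt0 (pd : seq (nat * nat)) : all prime (unzip1 pd) ->
  (0 < \prod_(f <- pd) f.1 ^ f.2)%N.
Proof.
elim: pd => [|[p e] pd IH] /=; first by rewrite big_nil.
case/andP=> pp hall; rewrite big_cons muln_gt0 expn_gt0 prime_gt0 //=.
exact: IH.
Qed.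

Lemma pd_bound d (pd : seq (nat * nat)) : 0 < d -> all prime (unzip1 pd) ->
  INR (size (foldr PrimeDecompAux.add_divisors [:: 1%N] pd)) <=
  Bc d ^ (count (fun f => f.1 < P0 d)%N pd) *
  Rpower (INR (\prod_(f <- pd) f.1 ^ f.2)%N) d.
Proof.
move=> hd; elim: pd => [|[p e] pd IH].
  rewrite /= big_nil /Rpower /= ln_1 Rmult_0_r exp_0; lra.
case/andP=> pp hall.
have IH' := IH hall.
have -> : size (foldr PrimeDecompAux.add_divisors [:: 1%N] ((p, e) :: pd)) =
   (e.+1 * size (foldr PrimeDecompAux.add_divisors [:: 1%N] pd))%N by exact: size_add_divisors.
rewrite -multE mult_INR big_cons mult_INR.
have hp2 : (2 <= p)%N by apply prime_gt1.
have hF := factor_bound d p e hd hp2.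
have hpos1 : 0 < INR (p ^ e)%N.
  apply lt_0_INR; apply/ltP; by rewrite expn_gt0 prime_gt0.
have hpos2 : 0 < INR (\prod_(f <- pd) f.1 ^ f.2)%N.
  apply lt_0_INR; apply/ltP; exact: prod_pd_gt0.
rewrite -Rpower_mult_distr // pow_add.
have hB := Bc_ge1 d hd.
have hc : (if (p < P0 d)%N then Bc d else 1) = Bc d ^ (p < P0 d)%N.
  by case: (p < P0 d)%N => /=; lra.
rewrite -hc.
have e1 : 0 <= INR e.+1 by apply pos_INR.
have e2 : 0 <= INR (size (foldr PrimeDecompAux.add_divisors [:: 1%N] pd)) by apply pos_INR.
have -> : (if (p < P0 d)%N then Bc d else 1) * Bc d ^ count (fun f : nat * nat => (f.1 < P0 d)%N) pd *
  (Rpower (INR (p ^ e)%N) d * Rpower (INR (\prod_(f <- pd) f.1 ^ f.2)%N) d) =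
  ((if (p < P0 d)%N then Bc d else 1) * Rpower (INR (p ^ e)%N) d) *
  (Bc d ^ count (fun f : nat * nat => (f.1 < P0 d)%N) pd * Rpower (INR (\prod_(f <- pd) f.1 ^ f.2)%N) d) by ring.
by apply Rmult_le_compat.
Qed.

Lemma divisors_bound d n : 0 < d -> (0 < n)%N ->
  INR (size (divisors n)) <= Bc d ^ (P0 d) * Rpower (INR n) d.
Proof.
move=> hd hn.
have hall : all prime (unzip1 (prime_decomp n)).
  apply/allP => p; rewrite -/(primes n) mem_primes; by case/andP.
have H := pd_bound d (prime_decomp n) hd hall.
rewrite -(prod_prime_decomp hn) in H.
rewrite /divisors.
apply (Rle_trans _ _ _ H).
have hpos : 0 < Rpower (INR n) d by apply exp_pos.
apply Rmult_le_compat_r; first lra.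
apply Rle_pow; first exact: Bc_ge1.
apply/leP.
have -> : count (fun f : nat * nat => (f.1 < P0 d)%N) (prime_decomp n) =
  count (fun p => p < P0 d)%N (primes n) by rewrite /primes count_map.
rewrite -size_filter.
have hs : {subset [seq p <- primes n | (p < P0 d)%N] <= iota 0 (P0 d)}.
  move=> p; rewrite mem_filter mem_iota add0n; by case/andP=> ->.
have := uniq_leq_size (filter_uniq _ (primes_uniq n)) hs.
by rewrite size_iota.
Qed.
Lemma iota_seq m n : iota m n = List.seq m n.
Proof. by elim: n m => //= n IH m; rewrite IH. Qed.

Lemma rem_dvd (c : Z) (k : nat) : (0 < k)%N ->
  Z.eqb (Z.rem c (Z.of_nat k)) 0 = (k %| Z.to_nat (Z.abs c))%N.
Proof.
move=> hk.
have hk0 : Z.of_nat k <> 0%Z by move/ltP: hk; lia.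
apply/idP/idP.
- move/Z.eqb_eq => h1.
  have : (Z.of_nat k | Z.abs c)%Z by apply Z.divide_abs_r, Z.rem_divide.
  case=> z hz.
  apply/dvdnP; exists (Z.to_nat z).
  have hz0 : (0 <= z)%Z.
    have := Z.abs_nonneg c; rewrite hz => h.
    move/ltP: hk => hk'; nia.
  rewrite -multE; lia.
- case/dvdnP => z hz.
  apply/Z.eqb_eq; apply/(Z.rem_divide _ _ hk0); apply/Z.divide_abs_r.
  exists (Z.of_nat z).
  rewrite -(Z2Nat.id (Z.abs c)); last by apply Z.abs_nonneg.
  rewrite hz -multE; lia.
Qed.

Lemma filter_count (c : Z) (l : list nat) : all (fun k => 0 < k)%N l ->
  length (List.filter (fun d => Z.eqb (Z.rem c d) 0) (List.map Z.of_nat l)) =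
  count (fun k => k %| Z.to_nat (Z.abs c))%N l.
Proof.
elim: l => //= k l IH /andP[hk hl].
rewrite rem_dvd //; case: (_ %| _)%N => /=; by rewrite IH.
Qed.

Lemma tau_bound d (c : Z) : 0 < d -> c <> 0%Z ->
  INR (tau c) <= Bc d ^ (P0 d) * Rpower (IZR (Z.abs c)) d.
Proof.
move=> hd hc.
set n := Z.to_nat (Z.abs c).
have hn : (0 < n)%N by apply/ltP; rewrite /n; lia.
have hnR : INR n = IZR (Z.abs c).
  by rewrite INR_IZR_INZ /n Z2Nat.id //; apply Z.abs_nonneg.
rewrite -hnR.
apply: (Rle_trans _ _ _ _ (divisors_bound d n hd hn)).
apply le_INR; apply/leP.
rewrite /tau -/n -iota_seq filter_count; last first.
  by apply/allP => k; rewrite mem_iota; case/andP.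
rewrite -/n -size_filter.
apply uniq_leq_size; first by apply filter_uniq, iota_uniq.
move=> k; rewrite mem_filter mem_iota => /andP[hk /andP[hk1 _]].
by rewrite -dvdn_divisors.
Qed.

End DivBound.

From Stdlib Require Import ssreflect ssrbool.
Open Scope R_scope.

Lemma Z_window_In (M n : Z) : (0 <= M)%Z -> In n (Z_window M) <-> (-M <= n <= M)%Z.
Proof.
move=> hM; unfold Z_window; rewrite in_map_iff; split.
- move=> [k [<- hk]]; apply in_seq in hk; lia.
- move=> hn; exists (Z.to_nat (n + M)); split; first lia.
  apply in_seq; lia.
Qed.

Lemma Z_window_length (M : Z) : length (Z_window M) = Z.to_nat (2 * M + 1).
Proof. unfold Z_window; by rewrite length_map length_seq. Qed.

Lemma Z_window_NoDup (M : Z) : NoDup (Z_window M).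
Proof.
unfold Z_window; apply NoDup_map_NoDup_ForallPairs; last apply seq_NoDup.
move=> x y _ _; lia.
Qed.

Lemma filter_mono {T} (f g : T -> bool) (l : list T) :
  (forall x, In x l -> f x = true -> g x = true) ->
  (length (filter f l) <= length (filter g l))%nat.
Proof.
elim: l => [|x l IH] //= H.
have IH' : (length (filter f l) <= length (filter g l))%nat.
  apply IH => y hy; apply H; by right.
case hf: (f x); case hg: (g x) => /=; try lia.
by rewrite (H x (or_introl eq_refl) hf) in hg.
Qed.

Lemma filter_or_le {T} (f g : T -> bool) (l : list T) :
  (length (filter (fun x => f x || g x) l) <= length (filter f l) + length (filter g l))%nat.
Proof.
elim: l => [|x l IH] //=.
case: (f x); case: (g x) => /=; lia.
Qed.

Lemma filter_exists_le {T U} (Q : U -> T -> bool) (D : list U) (l : list T) :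
  (length (filter (fun n => existsb (fun d => Q d n) D) l) <=
   list_sum (map (fun d => length (filter (Q d) l)) D))%nat.
Proof.
elim: D => [|d D IH] /=.
- by elim: l.
- eapply Nat.le_trans; first apply (filter_or_le (Q d) (fun n => existsb (fun d => Q d n) D)).
  lia.
Qed.

Lemma list_sum_le {U} (F : U -> nat) (D : list U) (K : R) :
  (forall d, In d D -> INR (F d) <= K) ->
  INR (list_sum (map F D)) <= INR (length D) * K.
Proof.
elim: D => [|d D IH] H; first by simpl; lra.
rewrite [map _ _]/= [list_sum _]/= [length _]/= plus_INR S_INR.
have h1 := H d (or_introl eq_refl).
have h2 : INR (list_sum (map F D)) <= INR (length D) * K.
  apply IH => y hy; apply H; by right.
lra.
Qed.

Definition Qd (a b : Z) (x1 : R) (d n : Z) : bool :=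
  if Rle_dec (Rabs (IZR n)) x1 then Z.eqb (Z.rem (a * n + b) d) 0 else false.

Lemma count_one (a b d : Z) (x1 : R) (M : Z) : (0 < d)%Z -> 0 <= x1 ->
  INR (length (filter (Qd a b x1 d) (Z_window M))) <=
  4 * x1 * IZR (Z.gcd a d) / IZR d + 1.
Proof.
move=> hd hx1.
set L := filter (Qd a b x1 d) (Z_window M).
have hND : NoDup L by apply NoDup_filter, Z_window_NoDup.
have hmem : forall n, In n L -> Rabs (IZR n) <= x1 /\ (d | a * n + b)%Z.
  move=> n; rewrite /L filter_In /Qd => [[_]].
  case: (Rle_dec _ _) => // h /Z.eqb_eq h2; split => //.
  apply Z.rem_divide => //; lia.
set g := Z.gcd a d.
have hg0 : (0 <= g)%Z by apply Z.gcd_nonneg.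
have hgn0 : g <> 0%Z by move/Z.gcd_eq_0_r; lia.
have [m hm] : (g | d)%Z by apply Z.gcd_divide_r.
have [a' ha] : (g | a)%Z by apply Z.gcd_divide_l.
have hmpos : (0 < m)%Z by nia.
have hcop : Z.gcd m a' = 1%Z.
  have := Z.gcd_div_gcd d a g hgn0.
  rewrite Z.gcd_comm -/g => h; rewrite -h //.
  by rewrite {1}hm {1}ha !Z.div_mul.
have hRd : IZR d = IZR m * IZR g by rewrite hm mult_IZR.
have hgR : 0 < IZR g by apply IZR_lt; lia.
have hmR : 0 < IZR m by apply IZR_lt; lia.
have hpos : 0 <= 4 * x1 * IZR g / IZR d.
  rewrite hRd; apply Rmult_le_pos; first nra.
  apply Rlt_le, Rinv_0_lt_compat; nra.
destruct L as [|n0 rest] eqn:EL; first by simpl; lra.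
have hn0 := hmem n0 (or_introl eq_refl).
have hdiv : forall n, In n (n0 :: rest) -> (m | n - n0)%Z.
  move=> n hn; have [h1 h2] := hmem n hn.
  have h3 : (d | a * (n - n0))%Z.
    have -> : (a * (n - n0) = (a * n + b) - (a * n0 + b))%Z by ring.
    apply Z.divide_sub_r => //; exact: (proj2 hn0).
  apply (Z.gauss _ a') => //.
  apply (Z.mul_divide_cancel_r _ _ g) => //.
  rewrite hm ha in h3.
  by have -> : (a' * (n - n0) * g = a' * g * (n - n0))%Z by ring.
set phi := fun n => ((n - n0) / m)%Z.
have hkey : forall n, In n (n0 :: rest) -> (n - n0 = phi n * m)%Z.
  move=> n hn; have [k hk] := hdiv n hn.
  by rewrite /phi hk Z.div_mul //; lia.
set N := (up (2 * x1 / IZR m) - 1)%Z.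
have [hup1 hup2] := archimed (2 * x1 / IZR m).
have hq : 0 <= 2 * x1 / IZR m.
  apply Rmult_le_pos; first lra. apply Rlt_le, Rinv_0_lt_compat; lra.
have hN0 : (0 <= N)%Z.
  have : (0 < up (2 * x1 / IZR m))%Z by apply lt_IZR; lra.
  rewrite /N; lia.
have hincl : incl (map phi (n0 :: rest)) (Z_window N).
  move=> j /in_map_iff [n [<- hn]].
  apply Z_window_In => //.
  have [hn1 _] := hmem n hn.
  have hk := hkey n hn.
  have hA : IZR (Z.abs (phi n)) * IZR m <= 2 * x1.
    have hz : (Z.abs (phi n) * m = Z.abs (n - n0))%Z.
      rewrite hk Z.abs_mul (Z.abs_eq m) //; lia.
    rewrite -mult_IZR hz abs_IZR minus_IZR.
    have := Rabs_triang (IZR n) (- IZR n0).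
    rewrite Rabs_Ropp; have := proj1 hn0; unfold Rminus; lra.
  have hB : IZR (Z.abs (phi n)) <= 2 * x1 / IZR m.
    apply (Rmult_le_reg_r (IZR m)) => //.
    rewrite /Rdiv Rmult_assoc Rinv_l; lra.
  have : (Z.abs (phi n) < up (2 * x1 / IZR m))%Z by apply lt_IZR; lra.
  rewrite /N; lia.
have hFP : ForallPairs (fun x y : Z => phi x = phi y -> x = y) (n0 :: rest).
  move=> x y hx hy; have := hkey x hx; have := hkey y hy; lia.
have hlen := NoDup_incl_length (NoDup_map_NoDup_ForallPairs phi hFP hND) hincl.
rewrite length_map Z_window_length in hlen.
have hlen' := le_INR _ _ hlen.
have e : INR (Z.to_nat (2 * N + 1)) = IZR (2 * N + 1).
  rewrite INR_IZR_INZ Z2Nat.id //; lia.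
rewrite e in hlen'.
apply (Rle_trans _ _ _ hlen').
rewrite plus_IZR mult_IZR minus_IZR.
have hNR : IZR (up (2 * x1 / IZR m)) - 1 <= 2 * x1 / IZR m by lra.
have -> : 4 * x1 * IZR g / IZR d = 2 * (2 * x1 / IZR m).
  rewrite hRd; field; lra.
simpl IZR; lra.
Qed.

Theorem lemma2p3 :
  forall (A eps : R), 1 <= A -> 0 < eps ->
  exists K : R, 0 < K /\
    forall (a b c : Z) (x1 x2 : R),
      a <> 0%Z -> c <> 0%Z -> 1 <= x1 -> 1 <= x2 ->
      IZR (Z.abs c) < Rpower x2 A ->
      INR (bad_count a b c x1 x2) <=
        K * (x1 * IZR (Z.gcd a c) / Rpower x2 (1 - eps) + INR (tau c)).
Proof.
move=> A eps hA heps.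
set dl := eps / A.
have hdl : 0 < dl by apply Rdiv_lt_0_compat; lra.
set C := DivBound.Bc dl ^ DivBound.P0 dl.
have hC : 1 <= C by apply pow_R1_Rle, DivBound.Bc_ge1.
exists (4 * C + 1); split; first lra.
move=> a b c x1 x2 ha hc hx1 hx2 hcA.
set G := Z.gcd a c.
have hG : (0 < G)%Z.
  have := Z.gcd_nonneg a c; have : G <> 0%Z by move/Z.gcd_eq_0_l; lia. lia.
have hGR : 0 < IZR G by apply IZR_lt.
set n := Z.to_nat (Z.abs c).
set D := filter (fun d => Z.eqb (Z.rem c d) 0 && (if Rlt_dec x2 (IZR d) then true else false))
   (map Z.of_nat (seq 1 n)).
set W := Z_window (Z.abs (up x1)).
have h1 : (bad_count a b c x1 x2 <= length (filter (fun m => existsb (fun d => Qd a b x1 d m) D) W))%nat.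
{ apply filter_mono => x _.
  case: Rle_dec => // hle; case: Rlt_dec => // hlt _.
  apply existsb_exists; exists (Z.gcd (a * x + b) c).
  set g := Z.gcd (a * x + b) c in hlt *.
  have hg1 : (1 < g)%Z by apply lt_IZR; lra.
  have hgc : (g | c)%Z by apply Z.gcd_divide_r.
  have hgle : (g <= Z.abs c)%Z.
    apply Z.divide_pos_le; first lia. by apply Z.divide_abs_r.
  split.
  - apply/filter_In; split.
    + apply/in_map_iff; exists (Z.to_nat g); split; first lia.
      apply/in_seq; rewrite /n; lia.
    + apply andb_true_intro; split.
      * apply Z.eqb_eq, Z.rem_divide => //; lia.
      * by case: Rlt_dec.
  - rewrite /Qd; destruct (Rle_dec (Rabs (IZR x)) x1) as [hh|hh] => //.
    apply Z.eqb_eq, Z.rem_divide; first lia.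
    apply Z.gcd_divide_l. }
have h2 := filter_exists_le (fun d m => Qd a b x1 d m) D W.
have h3 : INR (list_sum (map (fun d => length (filter (Qd a b x1 d) W)) D)) <=
          INR (length D) * (4 * x1 * IZR G / x2 + 1).
  apply list_sum_le => d /filter_In [hdin /andb_prop [hrem hdx]].
  move: hdx; case: Rlt_dec => // hdx _.
  have hd0 : (0 < d)%Z by apply lt_IZR; lra.
  apply (Rle_trans _ _ _ (count_one a b d x1 _ hd0 ltac:(lra))).
  have hgd : (Z.gcd a d <= G)%Z.
    apply Z.divide_pos_le => //.
    apply Z.gcd_greatest; first apply Z.gcd_divide_l.
    apply (Z.divide_trans _ d); first apply Z.gcd_divide_r.
    apply Z.rem_divide; [lia| exact: (proj1 (Z.eqb_eq _ _) hrem)].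
  have hgd0 : (0 < Z.gcd a d)%Z.
    have := Z.gcd_nonneg a d; have : Z.gcd a d <> 0%Z by move/Z.gcd_eq_0_r; lia. lia.
  have hgdR : IZR (Z.gcd a d) <= IZR G by apply IZR_le.
  have hgdR0 : 0 < IZR (Z.gcd a d) by apply IZR_lt.
  have : IZR (Z.gcd a d) / IZR d <= IZR G / x2.
    { rewrite /Rdiv; apply Rmult_le_compat; try lra.
    - apply Rlt_le, Rinv_0_lt_compat; lra.
    - apply Rinv_le_contravar; lra. }
  have : 4 * x1 * IZR (Z.gcd a d) / IZR d = 4 * x1 * (IZR (Z.gcd a d) / IZR d) by rewrite /Rdiv; ring.
  have : 4 * x1 * IZR G / x2 = 4 * x1 * (IZR G / x2) by rewrite /Rdiv; ring.
  nra.
have h4 : (length D <= tau c)%nat.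
  apply filter_mono => x _ /andb_prop [-> _] //.
have h5 : INR (tau c) <= C * Rpower x2 eps.
  apply (Rle_trans _ _ _ (DivBound.tau_bound dl c hdl hc)).
  apply Rmult_le_compat_l; first lra.
  have -> : Rpower x2 eps = Rpower (Rpower x2 A) dl.
    rewrite Rpower_mult /dl; f_equal; field; lra.
  apply Rle_Rpower_l; first lra.
  split; last lra.
  apply IZR_lt; lia.
have hP : Rpower x2 (1 - eps) * Rpower x2 eps = x2.
  rewrite -Rpower_plus; replace (1 - eps + eps) with 1 by ring; apply Rpower_1; lra.
have hP1 : 0 < Rpower x2 (1 - eps) by apply exp_pos.
have hPe : 0 < Rpower x2 eps by apply exp_pos.
have hbad : INR (bad_count a b c x1 x2) <= INR (tau c) * (4 * x1 * IZR G / x2 + 1).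
  { apply (Rle_trans _ (INR (length D) * (4 * x1 * IZR G / x2 + 1))).
  - apply (Rle_trans _ _ _ (le_INR _ _ h1)); apply (Rle_trans _ _ _ (le_INR _ _ h2)); exact h3.
  - apply Rmult_le_compat_r.
    + have : 0 <= 4 * x1 * IZR G / x2.
        apply Rmult_le_pos; first nra. apply Rlt_le, Rinv_0_lt_compat; lra.
      lra.
    + exact: le_INR. }
apply (Rle_trans _ _ _ hbad).
set T := INR (tau c) in h5 *.
have hT : 0 <= T by apply pos_INR.
set y := x1 * IZR G / Rpower x2 (1 - eps).
have hy : 0 <= y.
  apply Rmult_le_pos; first nra. apply Rlt_le, Rinv_0_lt_compat; lra.
have hkey : 4 * x1 * IZR G / x2 * (C * Rpower x2 eps) = 4 * C * y.
  rewrite /y; move: hP hP1 hPe; set P1 := Rpower x2 (1 - eps); set Pe := Rpower x2 eps.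
  move=> hP hP1 hPe; rewrite -hP; field; lra.
have hx : 0 <= 4 * x1 * IZR G / x2.
  apply Rmult_le_pos; first nra. apply Rlt_le, Rinv_0_lt_compat; lra.
have : T * (4 * x1 * IZR G / x2) <= 4 * x1 * IZR G / x2 * (C * Rpower x2 eps).
  rewrite (Rmult_comm T); apply Rmult_le_compat_l; lra.
nra.
Qed.
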